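(* Let $\mathbb{Q}$ be a path measure on $[0,T]$ in $\mathbb{R}^d$, let $\Pi^*$ be a distribution on $\mathbb{R}^d$, let $\mathbb{Q}^x=\mathbb{Q}(\cdot\mid Z_T=x)$ and $\mathbb{Q}^{\Pi^*}=\int\mathbb{Q}^x\,\Pi^*(dx)$. Assume the Radon–Nikodym derivative $\pi^*(z)=\frac{d\Pi^*}{d\mathbb{Q}_T}(z)$ exists and is positive everywhere. Then $\mathbb{Q}^{\Pi^*}$ is Markov if and only if $\mathbb{Q}$ is Markov.
   Context: $\mathbb{Q}_T$ denotes the law of $Z_T$ under $\mathbb{Q}$; $\mathbb{Q}^{\Pi^*}$ is the law of a path obtained by drawing $x\sim\Pi^*$ then $Z\sim\mathbb{Q}^x$. *)

(* Defs.v *)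
From HB Require Import structures.
From mathcomp Require Import all_boot all_order all_algebra.
From mathcomp Require Import all_classical all_reals all_analysis.
From mathcomp Require Import measurable_realfun.
Set Implicit Arguments. Unset Strict Implicit. Unset Printing Implicit Defensive.
Import Order.TTheory GRing.Theory Num.Theory.
Local Open Scope classical_set_scope.
Local Open Scope ring_scope.

(* Path space on [0,T] in R^d: functions time -> R^d (R^d = d.-tuple R with its
   product (= Borel) sigma-algebra from the library), equipped with the
   cylinder sigma-algebra generated by the coordinate maps Z_t, t in [0,T].
   Zproc t = canonical coordinate process Z_t.
   past t / future t = sigma(Z_s, s <= t) / sigma(Z_s, s >= t).
   cond_version P t A g : g(Z_t) is a version of P(A | Z_t).
   is_markov P : for all t, past and future are conditionally independent
   given Z_t under P, i.e. P(A /\ B | Z_t) = P(A | Z_t) P(B | Z_t) a.s. *)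
Section defs.
Variables (R : realType) (d : nat) (T : R).

Definition time := {t : R | 0 <= t <= T}.

Definition path_carrier := time -> d.-tuple R.
HB.instance Definition _ := gen_eqMixin path_carrier.
HB.instance Definition _ := gen_choiceMixin path_carrier.
HB.instance Definition _ := isPointed.Build path_carrier (fun _ => nseq_tuple d 0).
Definition pathgen (S : set time) : set (set path_carrier) :=
  fun A => exists t, S t /\ exists B : set (d.-tuple R),
    measurable B /\ A = (fun w => w t) @^-1` B.

Definition pathsp := @g_sigma_algebraType path_carrier (pathgen setT).


Definition endT (hT : 0 < T) : time :=
  exist (fun t : R => 0 <= t <= T) T (introT andP (conj (ltW hT) (lexx T))).

Definition Zproc (t : time) (w : pathsp) : d.-tuple R := w t.

Definition past (t : time) : set (set pathsp) :=
  <<s pathgen [set s | sval s <= sval t] >>.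
Definition future (t : time) : set (set pathsp) :=
  <<s pathgen [set s | sval t <= sval s] >>.

Local Open Scope ereal_scope.
Definition cond_version (P : probability pathsp R) (t : time) (A : set pathsp)
   (g : d.-tuple R -> R) :=
  measurable_fun setT g /\
  forall C : set (d.-tuple R), measurable C ->
    P (A `&` Zproc t @^-1` C) = \int[P]_(w in Zproc t @^-1` C) (g (Zproc t w))%:E.

Definition is_markov (P : probability pathsp R) :=
  forall (t : time) (A B : set pathsp), past t A -> future t B ->
  forall gA gB, cond_version P t A gA -> cond_version P t B gB ->
  cond_version P t (A `&` B) (fun x => gA x * gB x)%R.
End defs.

(* Main.v *)
Require Import Defs.
From HB Require Import structures.
From mathcomp Require Import all_boot all_order all_algebra.
From mathcomp Require Import all_classical all_reals all_analysis.
From mathcomp Require Import measurable_realfun.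
From mathcomp Require Import ring.
Import Order.TTheory GRing.Theory Num.Theory.
Local Open Scope classical_set_scope.
Local Open Scope ring_scope.

Module Helpers.
Set Implicit Arguments. Unset Strict Implicit. Unset Printing Implicit Defensive.
Import numFieldNormedType.Exports.
Local Open Scope classical_set_scope.
Local Open Scope ring_scope.
Local Open Scope ereal_scope.

Definition dmeasure d (X : measurableType d) (R : realType) (mu : set X -> \bar R) (rho : X -> \bar R) (A : set X) :=
  \int[mu]_(x in A) rho x.

Section dm.
Context d (X : measurableType d) (R : realType) (mu : {measure set X -> \bar R}) (rho : X -> \bar R).
Hypotheses (mrho : measurable_fun setT rho) (rho0 : forall x, 0 <= rho x).
Let dm0 : dmeasure mu rho set0 = 0. Proof. by rewrite /dmeasure integral_set0. Qed.
Let dm_ge0 A : 0 <= dmeasure mu rho A. Proof. by apply: integral_ge0 => x _. Qed.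
Let dm_sa : semi_sigma_additive (dmeasure mu rho).
Proof. exact: semi_sigma_additive_nng_induced. Qed.
Definition dmeasure_m : {measure set X -> \bar R} :=
  HB.pack_for (measure X R) (dmeasure mu rho) (isMeasure.Build _ _ _ (dmeasure mu rho) dm0 dm_ge0 dm_sa).
End dm.

Definition pfw d d' (X : measurableType d) (Y : measurableType d') (R : realType) (mu : set X -> \bar R) (Z : X -> Y) (A : set Y) := mu (Z @^-1` A).
Section pf.
Context d d' (X : measurableType d) (Y : measurableType d') (R : realType) (mu : {measure set X -> \bar R}) (Z : X -> Y).
Hypothesis mZ : measurable_fun setT Z.
Let pf0 : pfw mu Z set0 = 0.
Proof. by rewrite /pfw preimage_set0 measure0. Qed.
Let pf_ge0 A : 0 <= pfw mu Z A.
Proof. exact: measure_ge0. Qed.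
Let pf_sa : semi_sigma_additive (pfw mu Z).
Proof.
move=> F mF tF mUF; rewrite /pfw preimage_bigcup.
apply: measure_semi_sigma_additive.
- by move=> n; rewrite -[X in measurable X]setTI; exact: mZ.
- apply/trivIsetP => /= i j _ _ ij; rewrite -preimage_setI.
  by move/trivIsetP : tF => /(_ _ _ _ _ ij) ->//; rewrite preimage_set0.
- by rewrite -preimage_bigcup -[X in measurable X]setTI; exact: mZ.
Qed.
Definition pf_m : {measure set Y -> \bar R} :=
  HB.pack_for (measure Y R) (pfw mu Z) (isMeasure.Build _ _ _ (pfw mu Z) pf0 pf_ge0 pf_sa).
End pf.


Section dens.
Context d (X : measurableType d) (R : realType).
Import HBNNSimple.

Lemma dens (mu : {measure set X -> \bar R}) (rho : X -> \bar R)
  (mrho : measurable_fun setT rho) (rho0 : forall x, 0 <= rho x)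
  (rhofin : forall x, rho x \is a fin_num) (f : X -> \bar R) (E : set X) :
  (forall x, 0 <= f x) -> measurable E -> measurable_fun E f ->
  \int[dmeasure mu rho]_(x in E) f x = \int[mu]_(x in E) (f x * rho x).
Proof.
move=> f0 mE mf; pose nu := dmeasure_m mu mrho rho0.
change (\int[nu]_(x in E) f x = \int[mu]_(x in E) (f x * rho x)).
set g := rho.
pose h := nnsfun_approx mE mf.
have -> : \int[nu]_(x in E) f x =
    lim (\int[nu]_(x in E) (EFin \o h n) x @[n --> \oo]).
  have fE x : E x -> f x = lim ((EFin \o h n) x @[n --> \oo]).
    by move=> Ex; apply/esym/cvg_lim => //; exact: cvg_nnsfun_approx.
  under eq_integral => x /[!inE] /fE -> //.
  apply: monotone_convergence => //.
  - move=> n; apply/measurable_EFinP.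
    by apply: (measurable_funS measurableT) => //; exact/measurable_funP.
  - by move=> n x Ex //=; rewrite lee_fin.
  - by move=> x Ex a b ab; rewrite lee_fin; exact/lefP/nd_nnsfun_approx.
have -> : \int[mu]_(x in E) (f \* g) x =
    lim (\int[mu]_(x in E) ((EFin \o h n) \* g) x @[n --> \oo]).
  have fg x : E x -> f x * g x = lim (((EFin \o h n) \* g) x @[n --> \oo]).
    by move=> Ex; apply/esym/cvg_lim => //; apply: cvgeZr;
      [exact: rhofin|exact: cvg_nnsfun_approx].
  under eq_integral => x /[!inE] /fg -> //.
  apply: monotone_convergence => [//| | |].
  - move=> n; apply/emeasurable_funM; apply/measurable_funTS.
      exact/measurable_EFinP.
    exact: mrho.
  - by move=> n x Ex /=; rewrite mule_ge0 ?lee_fin.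
  - by move=> x Ex a b ab/=; rewrite lee_wpmul2r ?lee_fin//; exact/lefP/nd_nnsfun_approx.
suff suf n : \int[mu]_(x in E) ((EFin \o h n) x * g x) =
    \int[nu]_(x in E) (EFin \o h n) x.
  by rewrite (_ : (fun n => \int[mu]_(x in E) ((EFin \o h n) x * g x)) = fun n => \int[nu]_(x in E) (EFin \o h n) x) //; apply/funext => n; exact: suf.
transitivity (\int[nu]_(x in E)
   (\sum_(y \in range (h n)) (y * \1_(h n @^-1` [set y]) x)%:E)); last first.
  by apply: eq_integral => t tE; rewrite /= fimfunE -fsumEFin.
have indich m r : measurable_fun E (fun x => (r * \1_(h m @^-1` [set r]) x)%:E).
  by apply: (measurable_comp measurableT) => //; exact: measurable_funM.
rewrite ge0_integral_fsum//; last by move=> m y Ey; exact: nnfun_muleindic_ge0.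
transitivity (\int[mu]_(x in E) (\sum_(y \in range (h n))
    (y * \1_(h n @^-1` [set y]) x)%:E * g x)).
  under [RHS]eq_integral => x xE.
    rewrite -ge0_mule_fsuml => [|y]; last exact: nnfun_muleindic_ge0.
    rewrite fsumEFin // -(fimfunE _ x); over.
  by [].
rewrite ge0_integral_fsum//; last 2 first.
  - move=> y; apply: emeasurable_funM => //; apply: measurable_funTS.
    exact: mrho.
  - by move=> m y Ey; rewrite mule_ge0 ?nnfun_muleindic_ge0.
apply: eq_fsbigr => r rhn.
under [RHS]eq_integral do rewrite EFinM.
rewrite integralZl_indic_nnsfun => //.
under eq_integral do rewrite EFinM -muleA.
rewrite ge0_integralZl//.
- under eq_integral do rewrite muleC.
  rewrite (eq_integral (g \_ (h n @^-1` [set r]))); last first.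
    by move=> x xE; rewrite epatch_indic.
  rewrite -integral_mkcondr. rewrite (@integral_indic _ _ _ nu E mE (h n @^-1` [set r])); last exact: measurable_sfunP. by rewrite setIC.
- apply: emeasurable_funM; first exact/measurable_EFinP.
  exact/measurable_funTS.
- by move=> t Et; rewrite mule_ge0 ?lee_fin.
- by move: rhn; rewrite inE => -[t _ <-]; rewrite lee_fin.
Qed.
End dens.

Section KP.
Context d d' (X : measurableType d) (Y : measurableType d') (R : realType).

Lemma dens_push (mu : {measure set X -> \bar R}) (Z : X -> Y) (mZ : measurable_fun setT Z)
  (rho : X -> \bar R) (mrho : measurable_fun setT rho) (rho0 : forall x, 0 <= rho x)
  (rhofin : forall x, rho x \is a fin_num) (phi : Y -> \bar R) :
  (forall y, 0 <= phi y) -> measurable_fun setT phi ->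
  \int[mu]_x (phi (Z x) * rho x) = \int[pf_m (dmeasure_m mu mrho rho0) mZ]_y phi y.
Proof.
move=> phi0 mphi.
rewrite -dens//; last exact: measurableT_comp.
have := (@ge0_integral_pushforward _ _ X Y R Z mZ (dmeasure_m mu mrho rho0) setT phi measurableT mphi (fun y _ => phi0 y)).
by rewrite preimage_setT.
Qed.

Lemma KP (mu1 mu2 : {measure set X -> \bar R}) (Z : X -> Y) (mZ : measurable_fun setT Z)
  (rho1 rho2 : X -> \bar R) (mrho1 : measurable_fun setT rho1) (rho10 : forall x, 0 <= rho1 x)
  (rho1fin : forall x, rho1 x \is a fin_num)
  (mrho2 : measurable_fun setT rho2) (rho20 : forall x, 0 <= rho2 x)
  (rho2fin : forall x, rho2 x \is a fin_num) :
  (forall D, measurable D -> \int[mu1]_(x in Z @^-1` D) rho1 x = \int[mu2]_(x in Z @^-1` D) rho2 x) ->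
  forall phi : Y -> \bar R, (forall y, 0 <= phi y) -> measurable_fun setT phi ->
  \int[mu1]_x (phi (Z x) * rho1 x) = \int[mu2]_x (phi (Z x) * rho2 x).
Proof.
move=> h12 phi phi0 mphi.
rewrite (@dens_push mu1 Z mZ rho1 mrho1 rho10)// (@dens_push mu2 Z mZ rho2 mrho2 rho20)//.
by apply: eq_measure_integral => A mA _; exact: h12.
Qed.
End KP.

Section Pdens.
Context d (X : measurableType d) (R : realType).
Lemma Pdens (P Q : {measure set X -> \bar R}) (h : X -> \bar R)
  (mh : measurable_fun setT h) (h0 : forall x, 0 <= h x) (hfin : forall x, h x \is a fin_num) :
  (forall S, measurable S -> P S = \int[Q]_(w in S) h w) ->
  forall f : X -> \bar R, (forall x, 0 <= f x) -> measurable_fun setT f ->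
  \int[P]_w f w = \int[Q]_w (f w * h w).
Proof.
move=> hPQ f f0 mf.
rewrite (eq_measure_integral (dmeasure_m Q mh h0)); last by move=> A mA _; exact: hPQ.
exact: dens.
Qed.
End Pdens.

Local Open Scope classical_set_scope.
Local Open Scope ring_scope.

Section path.
Context (R : realType) (d : nat) (T : R).
Local Notation Om := (pathsp d T).

Lemma mZ (t : time T) : measurable_fun setT (@Zproc R d T t).
Proof.
move=> _ B mB; rewrite setTI; apply: sub_gen_smallest.
by exists t; split => //; exists B.
Qed.

Lemma past_meas (t : time T) (A : set Om) : past t A -> measurable A.
Proof.
apply: smallest_sub; first exact: sigma_algebra_measurable.
move=> B [s [_ HB]]; apply: sub_gen_smallest; by exists s.
Qed.

Lemma future_meas (t : time T) (A : set Om) : future t A -> measurable A.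
Proof.
apply: smallest_sub; first exact: sigma_algebra_measurable.
move=> B [s [_ HB]]; apply: sub_gen_smallest; by exists s.
Qed.

Lemma futureI (t : time T) (A B : set Om) : future t A -> future t B -> future t (A `&` B).
Proof.
move=> fA fB.
exact: (@measurableI _ (g_sigma_algebraType (@pathgen R d T [set s | sval t <= sval s]))).
Qed.

Lemma futureT (t : time T) : future t (@setT Om).
Proof.
exact: (@measurableT _ (g_sigma_algebraType (@pathgen R d T [set s | sval t <= sval s]))).
Qed.

Lemma future_end (hT : 0 < T) (t : time T) (D : set (d.-tuple R)) : measurable D ->
  future t (@Zproc R d T (endT hT) @^-1` D).
Proof.
move=> mD; apply: sub_gen_smallest; exists (endT hT); split; last by exists D.
by case: t => s /= /andP[].
Qed.

Local Open Scope ereal_scope.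
Lemma version_exists (P : probability Om R) (t : time T) (A : set Om) : measurable A ->
  exists g : d.-tuple R -> R, [/\ measurable_fun setT g, (forall x, (0 <= g x)%R) &
    cond_version P t A g].
Proof.
move=> mA.
pose rho := fun w : Om => ((\1_A w : R)%:E : \bar R).
have mrho : measurable_fun setT rho by apply/measurable_EFinP; exact: measurable_indic.
have rho0 : forall w, 0 <= rho w by move=> w; rewrite lee_fin.
pose nu0 := pf_m (dmeasure_m P mrho rho0) (@mZ t).
pose mu0 := pf_m P (@mZ t).
have nu0E C : measurable C -> nu0 C = P (A `&` Zproc t @^-1` C).
  move=> mC; rewrite /= /pfw /dmeasure integral_indic //.
  by rewrite -[X in measurable X]setTI; exact: mZ.
have hnu : nu0 setT < +oo.
  by rewrite nu0E // ltey_eq fin_num_measure //; apply: measurableI => //; rewrite preimage_setT.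
have hmu : mu0 setT < +oo.
  by rewrite /= /pfw preimage_setT probability_setT ltey.
pose nuF := mfrestr measurableT hnu.
pose muF := mfrestr measurableT hmu.
have dom : nuF `<< muF.
  apply/null_content_dominatesP => C mC; rewrite /muF /nuF /mfrestr /mrestr !setIT => h0.
  rewrite nu0E //; apply/eqP; rewrite -measure_le0 -h0 /= /pfw.
  apply: le_measure; rewrite ?inE.
  - by apply: measurableI => //; rewrite -[X in measurable X]setTI; exact: mZ.
  - by rewrite setIT -[X in measurable X]setTI; exact: mZ.
  - by rewrite setIT; exact: subIsetr.
pose f := Radon_Nikodym_SigmaFinite.f nuF muF.
have mf : measurable_fun setT f.
  exact: (measurable_int _ (Radon_Nikodym_SigmaFinite.f_integrable dom)).
have mg : measurable_fun setT (fun x => fine (f x)).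
  exact: measurableT_comp.
exists (fun x => fine (f x)); split => //.
  by move=> x; apply: fine_ge0; exact: Radon_Nikodym_SigmaFinite.f_ge0.
split => // C mC.
transitivity (nuF C); first by rewrite /nuF /mfrestr /mrestr setIT nu0E.
transitivity (\int[muF]_(x in C) f x); first exact: (Radon_Nikodym_SigmaFinite.f_integral dom mC).
rewrite (eq_measure_integral mu0); last first.
  by move=> B mB _; rewrite -[in RHS](setIT B).
rewrite (eq_integral (fun x => (fine (f x))%:E)); last first.
  by move=> x _; rewrite fineK //; exact: Radon_Nikodym_SigmaFinite.f_fin_num.
have := (@ge0_integral_pushforward _ _ Om _ R (Zproc t) (@mZ t) P C (fun x => (fine (f x))%:E) mC).
move=> ->//.
- exact/measurable_EFinP/measurable_funTS.
- by move=> x _; rewrite lee_fin; apply: fine_ge0; exact: Radon_Nikodym_SigmaFinite.f_ge0.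
Qed.

Lemma mZpre (t : time T) (D : set (d.-tuple R)) : measurable D -> measurable (Zproc t @^-1` D : set Om).
Proof. by move=> mD; rewrite -[X in measurable X]setTI; exact: mZ. Qed.

Lemma vext (P : probability Om R) (t : time T) (E : set Om) (mE : measurable E)
  (g : d.-tuple R -> R) (mg : measurable_fun setT g) (g0 : forall x, (0 <= g x)%R) :
  cond_version P t E g ->
  forall psi : d.-tuple R -> \bar R, (forall y, 0 <= psi y) -> measurable_fun setT psi ->
  \int[P]_w (psi (Zproc t w) * (\1_E w : R)%:E) =
  \int[P]_w (psi (Zproc t w) * (g (Zproc t w))%:E).
Proof.
case=> _ hv psi psi0 mpsi.
apply: (@KP _ _ _ _ _ P P _ (@mZ t) (fun w => (\1_E w : R)%:E) (fun w => (g (Zproc t w))%:E)) => //.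
all: try (by move=> w; rewrite lee_fin).
all: try (by apply/measurable_EFinP; exact: measurable_indic).
all: try (by apply/measurable_EFinP; exact: (measurableT_comp mg (@mZ t))).
by move=> D mD; rewrite integral_indic //; [exact: hv | exact: mZpre].
Qed.

Lemma mneg (g : d.-tuple R -> R) : measurable_fun setT g -> measurable [set x | (g x < 0)%R].
Proof.
move=> mg.
rewrite (_ : [set x | (g x < 0)%R] = g @^-1` `]-oo, 0%R[); last first.
  by apply/seteqP; split => x /=; rewrite in_itv.
by rewrite -[X in measurable X]setTI; apply: mg => //; exact: measurable_itv.
Qed.

Lemma version_null (P : probability Om R) (t : time T) (E : set Om) (mE : measurable E)
  (g : d.-tuple R -> R) (mg : measurable_fun setT g) :
  cond_version P t E g -> P (Zproc t @^-1` [set x | (g x < 0)%R]) = 0.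
Proof.
case=> _ hv.
have mN := mneg mg.
set S := Zproc t @^-1` _.
have mS : measurable S by exact: mZpre.
have hS := hv _ mN.
pose f := fun w => ((- g (Zproc t w))%R)%:E.
have f0 : forall w, S w -> 0 <= f w.
  by move=> w Sw; rewrite lee_fin oppr_ge0; apply: ltW.
have mf : measurable_fun S f.
  apply/measurable_EFinP; apply: measurable_funTS; apply: measurable_funN.
  exact: (measurableT_comp mg (@mZ t)).
have eqf : \int[P]_(w in S) (g (Zproc t w))%:E = - \int[P]_(w in S) f w.
  rewrite -integral_ge0N //; apply: eq_integral => w _.
  by rewrite /f EFinN oppeK.
have If0 : \int[P]_(w in S) f w = 0.
  apply/eqP; rewrite eq_le integral_ge0 // andbT.
  rewrite -oppe_ge0 -eqf -hS; exact: measure_ge0.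
have : \int[P]_(w in S) `|f w| = 0.
  by rewrite -If0; apply: eq_integral => w /[!inE] Sw; rewrite gee0_abs //; exact: f0.
move/(ae_eq_integral_abs P mS mf) => [N0 [mN0 PN0 sub]].
apply/eqP; rewrite -measure_le0 -PN0; apply: le_measure; rewrite ?inE //.
move=> w Sw; apply: sub => /= /(_ Sw).
rewrite /f => /eqP; rewrite eqe oppr_eq0; apply/negP.
by rewrite lt_eqF.
Qed.

Lemma ae_agree (P : probability Om R) (t : time T) (N : set (d.-tuple R)) (mN : measurable N)
  (PN : P (Zproc t @^-1` N) = 0) (u v : d.-tuple R -> R)
  (mu : measurable_fun setT u) (mv : measurable_fun setT v) :
  (forall x, ~ N x -> u x = v x) -> forall C, measurable C ->
  \int[P]_(w in Zproc t @^-1` C) (u (Zproc t w))%:E =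
  \int[P]_(w in Zproc t @^-1` C) (v (Zproc t w))%:E.
Proof.
move=> huv C mC; apply: (@ae_eq_integral _ _ _ P) => //.
- exact: mZpre.
- by apply/measurable_EFinP; apply: measurable_funTS; exact: (measurableT_comp mu (@mZ t)).
- by apply/measurable_EFinP; apply: measurable_funTS; exact: (measurableT_comp mv (@mZ t)).
exists (Zproc t @^-1` N); split => //; first exact: mZpre.
move=> w /= H; apply: contrapT => Nw; apply: H => _.
by rewrite huv.
Qed.

Lemma version_pos (P : probability Om R) (t : time T) (E : set Om) (mE : measurable E)
  (g : d.-tuple R -> R) (mg : measurable_fun setT g) :
  cond_version P t E g -> cond_version P t E (fun x => Num.max (g x) 0%R).
Proof.
move=> hv; have mg' : measurable_fun setT (fun x => Num.max (g x) 0%R).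
  exact: (measurable_maxr mg (measurable_cst _)).
split => // C mC; rewrite hv.2 //.
apply: (ae_agree (u := g) (v := fun x => Num.max (g x) 0%R) (mneg mg) (version_null mE mg hv)) => // x /negP.
by rewrite -leNgt => h; rewrite max_l.
Qed.

Lemma ae_prod (P : probability Om R) (t : time T) (A B : set Om) (mA : measurable A) (mB : measurable B)
  (gA gB : d.-tuple R -> R) (mgA : measurable_fun setT gA) (mgB : measurable_fun setT gB) :
  cond_version P t A gA -> cond_version P t B gB -> forall C, measurable C ->
  \int[P]_(w in Zproc t @^-1` C) ((gA (Zproc t w)) * gB (Zproc t w))%:E =
  \int[P]_(w in Zproc t @^-1` C) ((Num.max (gA (Zproc t w)) 0%R) * Num.max (gB (Zproc t w)) 0%R)%:E.
Proof.
move=> vA vB C mC.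
have mN := measurableU _ _ (mneg mgA) (mneg mgB).
have PN : P (Zproc t @^-1` ([set x | (gA x < 0)%R] `|` [set x | (gB x < 0)%R])) = 0.
  apply/eqP; rewrite -measure_le0 preimage_setU.
  rewrite -[leRHS](adde0 0) -{1}(version_null mA mgA vA) -(version_null mB mgB vB).
  by apply: (@measureU2 _ _ _ P); apply: mZpre; exact: mneg.
have mu : measurable_fun setT (fun x => gA x * gB x)%R by exact: measurable_funM.
have mv : measurable_fun setT (fun x => Num.max (gA x) 0%R * Num.max (gB x) 0%R)%R.
  by apply: measurable_funM; exact: (measurable_maxr _ (measurable_cst _)).
have huv : forall x, ~ ([set x | (gA x < 0)%R] `|` [set x | (gB x < 0)%R]) x ->
    (gA x * gB x = Num.max (gA x) 0%R * Num.max (gB x) 0%R)%R.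
  move=> x /not_orP [/negP hA /negP hB].
  by rewrite !max_l // leNgt.
exact: (ae_agree mN PN mu mv huv mC).
Qed.

Lemma indic_pre (X Y : Type) (f : X -> Y) (C : set Y) (w : X) : \1_(f @^-1` C) w = \1_C (f w) :> R.
Proof. by []. Qed.

Lemma intI (mu : {measure set Om -> \bar R}) (S : set Om) (f : Om -> \bar R) :
  \int[mu]_(x in S) f x = \int[mu]_x (f x * (\1_S x : R)%:E).
Proof.
rewrite integral_mkcond; apply: eq_integral => x _; rewrite patchE indicE.
by case: ifP => _; rewrite ?mule1 ?mule0.
Qed.
End path.

Local Open Scope classical_set_scope.
Local Open Scope ring_scope.

Section transfer.
Context (R : realType) (d : nat) (T : R).
Local Notation Om := (pathsp d T).
Local Open Scope ereal_scope.

Lemma mind (S : set Om) : measurable S -> measurable_fun setT (fun w : Om => (\1_S w : R)).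
Proof. by move=> mS; exact: measurable_indic. Qed.

Lemma transfer (hT : (0 < T)%R) (P Q : probability Om R) (phi : d.-tuple R -> R)
  (mphi : measurable_fun setT phi) (phi0 : forall x, (0 < phi x)%R)
  (hPQ : forall S, measurable S -> P S = \int[Q]_(w in S) (phi (Zproc (endT hT) w))%:E) :
  is_markov Q -> is_markov P.
Proof.
move=> HQ t A B pA fB gA gB vA vB.
have mA := past_meas pA; have mB := future_meas fB.
have mgA := vA.1; have mgB := vB.1.
split; first exact: measurable_funM.
move=> C mC.
have mZC : measurable (Zproc t @^-1` C : set Om) := mZpre t mC.
have [fA [mfA fA0 vfA]] := version_exists Q t mA.
have mfAZ : measurable_fun setT (fun w : Om => fA (Zproc t w)) := measurableT_comp mfA (@mZ _ _ _ t).
pose h := fun w : Om => (phi (Zproc (endT hT) w))%:E.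
have mh : measurable_fun setT h.
  by apply/measurable_EFinP; exact: (measurableT_comp mphi (@mZ _ _ _ _)).
have h0 : forall w, 0 <= h w by move=> w; rewrite lee_fin; exact: ltW.
have hfin : forall w, h w \is a fin_num by [].
have PD := Pdens mh h0 hfin hPQ.
have claimS : forall C0 : set (d.-tuple R), measurable C0 -> forall B', future t B' -> forall psi : d.-tuple R -> \bar R,
    (forall y, 0 <= psi y) -> measurable_fun setT psi ->
  \int[Q]_w (psi (Zproc (endT hT) w) * (\1_(A `&` B' `&` Zproc t @^-1` C0) w : R)%:E) =
  \int[Q]_w (psi (Zproc (endT hT) w) * (\1_(B' `&` Zproc t @^-1` C0) w * fA (Zproc t w))%:E).
  move=> C0 mC0 B' fB' psi psi0 mpsi.
  have mZC0 : measurable (Zproc t @^-1` C0 : set Om) := mZpre t mC0.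
  have mB' := future_meas fB'.
  apply: (@KP _ _ _ _ _ Q Q _ (@mZ _ _ _ (endT hT))
    (fun w => (\1_(A `&` B' `&` Zproc t @^-1` C0) w : R)%:E)
    (fun w => (\1_(B' `&` Zproc t @^-1` C0) w * fA (Zproc t w))%:E)) => //.
  all: try (by move=> w; rewrite lee_fin //; apply: mulr_ge0).
  all: try (by apply/measurable_EFinP; apply: mind; apply: measurableI => //; exact: measurableI).
  all: try (by apply/measurable_EFinP; apply: measurable_funM => //; apply: mind; exact: measurableI).
  move=> D mD.
  have fBD : future t (B' `&` Zproc (endT hT) @^-1` D) := futureI fB' (future_end hT mD).
  have mBD := future_meas fBD.
  have [fBd [mfBd fBd0 vfBd]] := version_exists Q t mBD.
  have vM := HQ t A _ pA fBD fA fBd vfA vfBd.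
  have mABC : measurable (A `&` B' `&` Zproc t @^-1` C0) by apply: measurableI => //; exact: measurableI.
  have mZD : measurable (Zproc (endT hT) @^-1` D : set Om) := mZpre _ mD.
  rewrite integral_indic //.
  transitivity (Q ((A `&` (B' `&` Zproc (endT hT) @^-1` D)) `&` Zproc t @^-1` C0)).
    by congr (Q _); apply/seteqP; split => w /=; tauto.
  rewrite vM.2 // intI [RHS]intI.
  have eR : \int[Q]_x ((\1_(B' `&` Zproc t @^-1` C0) x * fA (Zproc t x))%:E * (\1_(Zproc (endT hT) @^-1` D) x : R)%:E) = \int[Q]_x ((fun y => (fA y * \1_C0 y)%:E) (Zproc t x) * (\1_(B' `&` Zproc (endT hT) @^-1` D) x : R)%:E).
    apply: eq_integral => x _ /=; rewrite !indicI /= !indic_pre -!EFinM; congr EFin; ring.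
  rewrite eR (vext mBD mfBd fBd0 vfBd (psi := fun y => (fA y * \1_C0 y)%:E)).
  - apply: eq_integral => x _ /=; rewrite !indic_pre -!EFinM; congr EFin; ring.
  - by move=> y; rewrite lee_fin; apply: mulr_ge0.
  - by apply/measurable_EFinP; apply: measurable_funM => //; exact: measurable_indic.
have mphiE : measurable_fun setT (fun y => (phi y)%:E) by exact/measurable_EFinP.
have phiE0 : forall y, 0 <= (phi y)%:E by move=> y; rewrite lee_fin; exact: ltW.
have vfAP : cond_version P t A fA.
  split => // C' mC'.
  have mZC' : measurable (Zproc t @^-1` C' : set Om) := mZpre t mC'.
  rewrite hPQ; last exact: measurableI.
  rewrite intI.
  have := claimS C' mC' setT (@futureT _ _ _ t) (fun y => (phi y)%:E) phiE0 mphiE.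
  rewrite setIT setTI => ->.
  rewrite [RHS]intI PD.
  - by apply: eq_integral => x _; rewrite /h -!EFinM; congr EFin; ring.
  - by move=> x; rewrite lee_fin; apply: mulr_ge0.
  - by apply/measurable_EFinP; apply: measurable_funM => //; exact: mind.
have mgBp : measurable_fun setT (fun x => Num.max (gB x) 0%R) := measurable_maxr mgB (measurable_cst _).
have mgAp : measurable_fun setT (fun x => Num.max (gA x) 0%R) := measurable_maxr mgA (measurable_cst _).
have gBp0 : forall x, (0 <= Num.max (gB x) 0%R)%R by move=> x; rewrite le_max lexx orbT.
have gAp0 : forall x, (0 <= Num.max (gA x) 0%R)%R by move=> x; rewrite le_max lexx orbT.
have mABC : measurable (A `&` B `&` Zproc t @^-1` C) by apply: measurableI => //; exact: measurableI.
rewrite hPQ // intI.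
rewrite (claimS C mC B fB (fun y => (phi y)%:E)) //.
transitivity (\int[P]_w ((\1_(B `&` Zproc t @^-1` C) w * fA (Zproc t w))%:E)).
  rewrite PD.
  - by apply: eq_integral => x _; rewrite /h -!EFinM; congr EFin; ring.
  - by move=> x; rewrite lee_fin; apply: mulr_ge0.
  - by apply/measurable_EFinP; apply: measurable_funM => //; apply: mind; exact: measurableI.
transitivity (\int[P]_w ((fun y => (fA y * \1_C y)%:E) (Zproc t w) * (\1_B w : R)%:E)).
  by apply: eq_integral => x _ /=; rewrite !indicI /= !indic_pre -!EFinM; congr EFin; ring.
rewrite (vext mB mgBp gBp0 (version_pos mB mgB vB) (psi := fun y => (fA y * \1_C y)%:E)); last 2 first.
  - by move=> y; rewrite lee_fin; apply: mulr_ge0.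
  - by apply/measurable_EFinP; apply: measurable_funM => //; exact: measurable_indic.
transitivity (\int[P]_w ((fun y => (Num.max (gB y) 0%R * \1_C y)%:E) (Zproc t w) * (fA (Zproc t w))%:E)).
  by apply: eq_integral => x _ /=; rewrite -!EFinM; congr EFin; ring.
rewrite -(vext mA mfA fA0 vfAP (psi := fun y => (Num.max (gB y) 0%R * \1_C y)%:E)); last 2 first.
  - by move=> y; rewrite lee_fin; apply: mulr_ge0.
  - by apply/measurable_EFinP; apply: measurable_funM => //; exact: measurable_indic.
rewrite (vext mA mgAp gAp0 (version_pos mA mgA vA) (psi := fun y => (Num.max (gB y) 0%R * \1_C y)%:E)); last 2 first.
  - by move=> y; rewrite lee_fin; apply: mulr_ge0.
  - by apply/measurable_EFinP; apply: measurable_funM => //; exact: measurable_indic.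
rewrite (ae_prod mA mB mgA mgB vA vB mC) [RHS]intI.
by apply: eq_integral => x _ /=; rewrite !indic_pre -!EFinM; congr EFin; ring.
Qed.
End transfer.

Local Open Scope classical_set_scope.
Local Open Scope ring_scope.

Lemma measurable_inv (R : realType) : measurable_fun setT (@GRing.inv R).
Proof.
have -> : [set: R] = ~` [set 0] `|` [set 0].
  apply/seteqP; split => x //= _; have [->|h] := eqVneq x 0; [by right|by left; apply/eqP].
apply/measurable_funU; [by apply: measurableC|by []|split; last exact: measurable_fun_set1].
apply: subspace_continuous_measurable_fun => //; first exact: measurableC.
have H : {within ~` [set (0:R)], continuous (@GRing.inv R)}.
  rewrite continuous_open_subspace; last by rewrite openC; exact: closed_eq.
  move=> x; rewrite inE /= => /eqP x0; exact: inv_continuous.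
exact: H.
Qed.


End Helpers.
Import Helpers.
Import numFieldNormedType.Exports.

Theorem proposition9 (R : realType) (d : nat) (T : R) (hT : 0 < T)
  (Q : probability (pathsp d T) R)
  (Pi : probability (d.-tuple R) R)
  (pis : d.-tuple R -> R)
  (pis_meas : measurable_fun setT pis)
  (pis_pos : forall z, 0 < pis z)
  (pis_RN : forall B : set (d.-tuple R), measurable B ->
     Pi B = (\int[pushforward Q (Zproc (endT hT))]_(x in B) (pis x)%:E)%E)
  (Qx : d.-tuple R -> probability (pathsp d T) R)
  (Qx_meas : forall A : set (pathsp d T), measurable A ->
     @measurable_fun _ _ (d.-tuple R) (\bar R) setT (fun x => Qx x A))
  (Qx_cond : forall (A : set (pathsp d T)) (B : set (d.-tuple R)),
     measurable A -> measurable B ->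
     Q (A `&` Zproc (endT hT) @^-1` B) =
       (\int[pushforward Q (Zproc (endT hT))]_(x in B) Qx x A)%E)
  (QPi : probability (pathsp d T) R)
  (QPi_def : forall A : set (pathsp d T), measurable A ->
     QPi A = (\int[Pi]_x Qx x A)%E) :
  is_markov QPi <-> is_markov Q.
Proof.
have mZT := @mZ R d T (endT hT).
pose QT := pf_m Q mZT.
have mpisE : measurable_fun setT (fun x => (pis x)%:E) by exact/measurable_EFinP.
have pisE0 : forall x, (0 <= (pis x)%:E)%E by move=> x; rewrite lee_fin; exact: ltW.
have pisEfin : forall x, (pis x)%:E \is a fin_num by [].
have KEY : forall S, measurable S ->
    QPi S = (\int[Q]_(w in S) (pis (Zproc (endT hT) w))%:E)%E.
  move=> S mS; rewrite QPi_def //.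
  have hPi : forall B, measurable B -> Pi B = (\int[QT]_(x in B) (pis x)%:E)%E.
    by move=> B mB; exact: pis_RN.
  rewrite (@Pdens _ _ _ Pi QT _ mpisE pisE0 pisEfin hPi (fun x => Qx x S)); last 2 first.
  - by move=> x; exact: measure_ge0.
  - exact: Qx_meas.
  have mrhoQ : measurable_fun setT (fun x => Qx x S) := Qx_meas S mS.
  have rhoQ0 : forall x, (0 <= Qx x S)%E by move=> x; exact: measure_ge0.
  have rhoQfin : forall x, Qx x S \is a fin_num by move=> x; exact: fin_num_measure.
  have mrho : measurable_fun setT (fun w : pathsp d T => (\1_S w : R)%:E).
    by apply/measurable_EFinP; exact: measurable_indic.
  have rho0 : forall w : pathsp d T, (0 <= (\1_S w : R)%:E)%E by move=> w; rewrite lee_fin.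
  transitivity (\int[dmeasure_m QT mrhoQ rhoQ0]_x (pis x)%:E)%E.
    rewrite [LHS](eq_integral (fun x => ((pis x)%:E * Qx x S)%E)); last by move=> x _; exact: muleC.
    by symmetry; exact: (@dens _ _ _ QT _ mrhoQ rhoQ0 rhoQfin (fun x => (pis x)%:E) setT pisE0 measurableT mpisE).
  transitivity (\int[pf_m (dmeasure_m Q mrho rho0) mZT]_x (pis x)%:E)%E.
    apply: eq_measure_integral => D mD _.
    transitivity (Q (S `&` Zproc (endT hT) @^-1` D)).
      exact: (esym (Qx_cond S D mS mD)).
    symmetry; exact: (@integral_indic _ _ _ Q _ (mZpre _ mD) S mS).
  rewrite intI.
  symmetry; exact: (@dens_push _ _ _ _ _ Q _ mZT _ mrho rho0 (fun w => isT) (fun x => (pis x)%:E) pisE0 mpisE).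
have mh : measurable_fun setT (fun w => (pis (Zproc (endT hT) w))%:E).
  by apply/measurable_EFinP; exact: (measurableT_comp pis_meas mZT).
have h0 : forall w, (0 <= (pis (Zproc (endT hT) w))%:E)%E by move=> w; exact: pisE0.
have REV : forall S, measurable S ->
    Q S = (\int[QPi]_(w in S) ((pis (Zproc (endT hT) w))^-1)%:E)%E.
  move=> S mS; rewrite intI.
  rewrite (@Pdens _ _ _ QPi Q _ mh h0 (fun w => isT) KEY (fun w => (((pis (Zproc (endT hT) w))^-1)%:E * (\1_S w : R)%:E)%E)); last 2 first.
  - by move=> w; rewrite -EFinM lee_fin; apply: mulr_ge0 => //; rewrite invr_ge0; exact: ltW.
  - apply/measurable_EFinP; apply: measurable_funM; last exact: measurable_indic.
    exact: (measurableT_comp (@measurable_inv R) (measurableT_comp pis_meas mZT)).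
  transitivity (\int[Q]_x (\1_S x : R)%:E)%E; first by rewrite integral_indic // setIT.
  apply: eq_integral => w _; rewrite -!EFinM; congr EFin.
  by rewrite mulrAC mulVf ?mul1r // gt_eqF.
split.
- move=> HQPi.
  apply: (@transfer R d T hT Q QPi (fun x => (pis x)^-1)) => //.
  + exact: (measurableT_comp (@measurable_inv R) pis_meas).
  + by move=> x; rewrite invr_gt0.
- move=> HQ.
  exact: (@transfer R d T hT QPi Q pis pis_meas pis_pos KEY HQ).
Qed.
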